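(* Suppose $\hat F_R$ is $\lambda_R$-strongly convex with $\lambda_R\ge\lambda>0$, where $\lambda>0$ is such that $\hat F_S$ is $\lambda$-strongly convex for every dataset $S$. Then $\mathrm{RS}_{\mathrm{ERM}}(R)\le\frac{L}{n\lambda_R}$, $\mathrm{GS}_{\mathrm{ERM}}\le\Delta_{\mathrm{GS}}:=\frac{L}{n\lambda}$, and $$\frac{\mathrm{RS}_{\mathrm{ERM}}(R)}{\Delta_{\mathrm{GS}}}\le\frac{L/(n\lambda_R)}{L/(n\lambda)}=\frac{\lambda}{\lambda_R}.$$
   Context: Let $\mathcal{W}\subseteq\mathbb{R}^d$ and let $f:\mathcal{W}\times\mathcal{Z}\to\mathbb{R}$ be differentiable in $w$ and $L$-Lipschitz in $w$ uniformly over $z$ (so $\|\nabla_w f(w,z)\|_2\le L$). For a dataset $R=\{z_1,\dots,z_n\}$, $\hat F_R(w)=\frac1n\sum_{i=1}^nf(w,z_i)$ and $w_R=\arg\min_{w\in\mathcal{W}}\hat F_R(w)$; minimizers are assumed to be stationary points ($\nabla\hat F_R(w_R)=0$, e.g. $\mathcal{W}=\mathbb{R}^d$). $\hat F_R$ is $\lambda_R$-strongly convex if $\hat F_R(w)-\hat F_R(w')\ge\langle\nabla\hat F_R(w'),w-w'\rangle+\frac{\lambda_R}{2}\|w-w'\|^2$ for all $w,w'\in\mathcal{W}$. The retain sensitivity is $\mathrm{RS}_{\mathrm{ERM}}(R)=\sup_{z\in\mathcal{Z}}\|w_R-w_{R\cup\{z\}}\|$ and the global sensitivity is $\mathrm{GS}_{\mathrm{ERM}}=\sup_R\mathrm{RS}_{\mathrm{ERM}}(R)$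 over datasets $R$ of size $n$. *)

(* Defs.v *)
From HB Require Import structures.
From mathcomp Require Import all_boot all_order all_algebra.
From mathcomp Require Import all_classical all_reals all_analysis.
Set Implicit Arguments. Unset Strict Implicit. Unset Printing Implicit Defensive.
Import Order.TTheory GRing.Theory Num.Theory.
Import numFieldNormedType.Exports.
Local Open Scope classical_set_scope.
Local Open Scope ring_scope.

Section Defs.
Variables (R : realType) (d : nat) (Z : Type).

Definition dot (u v : 'rV[R]_d) : R := \sum_(i < d) u ord0 i * v ord0 i.
Definition norm2 (v : 'rV[R]_d) : R := Num.sqrt (\sum_(i < d) v ord0 i ^+ 2).

Definition grad (g : 'rV[R]_d -> R) (w : 'rV[R]_d) : 'rV[R]_d :=
  \row_(i < d) 'D_(delta_mx ord0 i) g w.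

(* empirical risk of a dataset S (a multiset, represented as a list) *)
Definition Fhat (f : 'rV[R]_d -> Z -> R) (S : seq Z) (w : 'rV[R]_d) : R :=
  (size S)%:R^-1 * \sum_(z <- S) f w z.

Definition strongly_convex (W : set 'rV[R]_d) (F : 'rV[R]_d -> R) (lam : R) :=
  forall w w', W w -> W w' ->
    F w - F w' >= dot (grad F w') (w - w') + lam / 2 * norm2 (w - w') ^+ 2.

(* retain sensitivity: w_ S is the (selected) ERM minimizer of dataset S;
   R ∪ {z} is the dataset z :: S (one extra point, n+1 points) *)
Definition RS (w_ : seq Z -> 'rV[R]_d) (S : seq Z) : R :=
  sup [set norm2 (w_ S - w_ (z :: S)) | z in [set: Z]].

Definition GS (w_ : seq Z -> 'rV[R]_d) (n : nat) : R :=
  sup [set RS w_ S | S in [set S : seq Z | size S = n]].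

End Defs.

(* Main.v *)
Require Import Defs.
From HB Require Import structures.
From mathcomp Require Import all_boot all_order all_algebra.
From mathcomp Require Import all_classical all_reals all_analysis.
From mathcomp Require Import ring lra.
Import Order.TTheory GRing.Theory Num.Theory.
Import numFieldNormedType.Exports.
Local Open Scope classical_set_scope.
Local Open Scope ring_scope.
Section Vec.
Variables (R : realType) (d : nat).
Implicit Types u v : 'rV[R]_d.

Lemma sum_sq_ge0 v : 0 <= \sum_(i < d) v ord0 i ^+ 2.
Proof. by apply: sumr_ge0 => i _; exact: sqr_ge0. Qed.

Lemma norm2_ge0 v : 0 <= norm2 v.
Proof. exact: sqrtr_ge0. Qed.

Lemma norm2_sq v : norm2 v ^+ 2 = \sum_(i < d) v ord0 i ^+ 2.
Proof. by rewrite /norm2 sqr_sqrtr // sum_sq_ge0. Qed.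

Lemma norm2N v : norm2 (- v) = norm2 v.
Proof. by rewrite /norm2; congr Num.sqrt; apply: eq_bigr => i _; rewrite mxE sqrrN. Qed.

Lemma norm2B u v : norm2 (u - v) = norm2 (v - u).
Proof. by rewrite -norm2N opprB. Qed.

Lemma dot0l v : dot 0 v = 0.
Proof. by rewrite /dot big1 // => i _; rewrite mxE mul0r. Qed.

Lemma dotNr u v : dot u (- v) = - dot u v.
Proof. by rewrite /dot -sumrN; apply: eq_bigr => i _; rewrite mxE mulrN. Qed.

Lemma CS_sq u v : (dot u v) ^+ 2 <= (\sum_(i < d) u ord0 i ^+ 2) * (\sum_(i < d) v ord0 i ^+ 2).
Proof.
set A := \sum_(i < d) u ord0 i ^+ 2; set B := \sum_(i < d) v ord0 i ^+ 2.
set C := dot u v.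
have A0 : 0 <= A by exact: sum_sq_ge0.
have [Az|Ap] := eqVneq A 0.
  have ui : forall i, u ord0 i = 0.
    move=> i; apply/eqP; rewrite -sqrf_eq0; apply/eqP.
    by apply: (psumr_eq0P (P := predT) (F := fun i => u ord0 i ^+ 2)) => // j _; exact: sqr_ge0.
  have -> : C = 0 by rewrite /C /dot big1 // => i _; rewrite ui mul0r.
  by rewrite Az expr0n /= mul0r.
have Apos : 0 < A by rewrite lt_def Ap A0.
have key : 0 <= \sum_(i < d) (A * v ord0 i - C * u ord0 i) ^+ 2.
  by apply: sumr_ge0 => i _; exact: sqr_ge0.
have E : \sum_(i < d) (A * v ord0 i - C * u ord0 i) ^+ 2 = A * (A * B - C ^+ 2).
  transitivity (\sum_(i < d) (A ^+ 2 * v ord0 i ^+ 2 - (2 * A * C) * (u ord0 i * v ord0 i) + C ^+ 2 * u ord0 i ^+ 2)).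
    by apply: eq_bigr => i _; ring.
  rewrite big_split /= sumrB -!mulr_sumr -/B -/A.
  rewrite -[\sum_(i < d) (u ord0 i * v ord0 i)]/(dot u v) -/C; ring.
rewrite E in key.
by rewrite -subr_ge0; rewrite (pmulr_rge0 _ Apos) in key.
Qed.

Lemma CS u v : dot u v <= norm2 u * norm2 v.
Proof.
have [C0|C0] := leP (dot u v) 0.
  by apply: (le_trans C0); apply: mulr_ge0; exact: norm2_ge0.
rewrite /norm2 -sqrtrM; last exact: sum_sq_ge0.
rewrite -(ger0_norm (ltW C0)) -sqrtr_sqr ler_sqrt; first exact: CS_sq.
by apply: mulr_ge0; exact: sum_sq_ge0.
Qed.
End Vec.
Section Der.
Variables (R : realType) (d : nat) (Z : Type) (f : 'rV[R]_d -> Z -> R).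

Lemma is_derive_sumS (S : seq Z) (x v : 'rV[R]_d) :
  (forall z, differentiable (fun w' => f w' z) x) ->
  is_derive x v (fun w => \sum_(z <- S) f w z) (\sum_(z <- S) 'D_v (fun w' => f w' z) x).
Proof.
move=> hd; elim: S => [|z S IH].
  have -> : (fun w => \sum_(z <- [::]) f w z) = cst 0.
    by apply/funext => w; rewrite big_nil.
  rewrite big_nil; exact: is_derive_cst.
have -> : (fun w => \sum_(y <- z :: S) f w y) =
   (fun w' => f w' z) + (fun w => \sum_(y <- S) f w y).
  by apply/funext => w; rewrite big_cons.
rewrite big_cons; apply: is_deriveD => //.
exact/derivableP/diff_derivable.
Qed.

Lemma D_Fhat (S : seq Z) (x v : 'rV[R]_d) :
  (forall z, differentiable (fun w' => f w' z) x) ->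
  'D_v (Fhat f S) x = (size S)%:R^-1 * \sum_(z <- S) 'D_v (fun w' => f w' z) x.
Proof.
move=> hd; have H := is_derive_sumS S x v hd.
have -> : Fhat f S = (size S)%:R^-1 \*: (fun w => \sum_(z <- S) f w z).
  by apply/funext => w.
rewrite deriveZ; last exact: ex_derive.
by rewrite derive_val.
Qed.
End Der.

Lemma key_bound (R : realType) (d : nat) (Z : Type)
  (W : set 'rV[R]_d) (f : 'rV[R]_d -> Z -> R) (L : R)
  (w_ : seq Z -> 'rV[R]_d) (S0 : seq Z) (lamR : R) (z : Z) :
  (forall z w, W w -> differentiable (fun w' => f w' z) w) ->
  (forall z w, W w -> norm2 (grad (fun w' => f w' z) w) <= L) ->
  (forall S : seq Z, (0 < size S)%N ->
     [/\ W (w_ S), (forall w, W w -> Fhat f S (w_ S) <= Fhat f S w)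
       & grad (Fhat f S) (w_ S) = 0]) ->
  (0 < size S0)%N -> 0 < lamR ->
  strongly_convex W (Fhat f S0) lamR ->
  norm2 (w_ S0 - w_ (z :: S0)) <= L / ((size S0)%:R * lamR).
Proof.
move=> hdiff hgrad herm n0 lam0 hsc.
set n := size S0.
set w := w_ S0; set w' := w_ (z :: S0).
have [Ww _ gw0] := herm S0 n0.
have [Ww' _ gw'0] := herm (z :: S0) isT.
have L0 : 0 <= L by apply: le_trans (hgrad z w Ww); exact: norm2_ge0.
set G := Fhat f S0.
set D := w' - w.
set N := norm2 D.
have N0 : 0 <= N by exact: norm2_ge0.
have h1 := hsc w' w Ww' Ww.
have h2 := hsc w w' Ww Ww'.
rewrite -/w -/G in gw0.
rewrite gw0 dot0l -/D -/N in h1.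
rewrite -opprB -/D dotNr norm2N -/N in h2.
have c1 : lamR * N ^+ 2 <= dot (grad G w') D by lra.
set h := (fun w0 => f w0 z).
have gi : forall i, n%:R * (grad G w') ord0 i = - (grad h w') ord0 i.
  move=> i.
  have := congr1 (fun M : 'rV[R]_d => M ord0 i) gw'0.
  rewrite !mxE /= !(@D_Fhat _ _ _ f _ w' _ (fun y => hdiff y w' Ww')).
  rewrite big_cons /= => /eqP; rewrite mulf_eq0 invr_eq0 pnatr_eq0 /= => /eqP E.
  rewrite mulrA mulfV ?pnatr_eq0 -?lt0n // mul1r.
  by apply/eqP; rewrite -addr_eq0 addrC; apply/eqP.
have c2 : n%:R * dot (grad G w') D = dot (grad h w') (- D).
  rewrite dotNr /dot mulr_sumr -sumrN; apply: eq_bigr => i _.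
  by rewrite mulrA gi mulNr.
have c3 : dot (grad h w') (- D) <= L * N.
  apply: (le_trans (CS _ _ _ _)); rewrite norm2N -/N.
  by apply: ler_wpM2r => //; exact: hgrad.
have npos : 0 < n%:R :> R by rewrite ltr0n.
have c4 : n%:R * lamR * N ^+ 2 <= L * N.
  by rewrite -mulrA; apply: le_trans (ler_wpM2l (ltW npos) c1) _; rewrite c2.
rewrite norm2B -/D -/N ler_pdivlMr; last exact: mulr_gt0.
have [Nz|Np] := eqVneq N 0; first by rewrite Nz mul0r.
have Npos : 0 < N by rewrite lt_def Np N0.
nra.
Qed.

Lemma RS_bound (R : realType) (d : nat) (Z : Type)
  (W : set 'rV[R]_d) (f : 'rV[R]_d -> Z -> R) (L : R)
  (w_ : seq Z -> 'rV[R]_d) (S0 : seq Z) (lamR : R) :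
  (forall z w, W w -> differentiable (fun w' => f w' z) w) ->
  (forall z w, W w -> norm2 (grad (fun w' => f w' z) w) <= L) ->
  (forall S : seq Z, (0 < size S)%N ->
     [/\ W (w_ S), (forall w, W w -> Fhat f S (w_ S) <= Fhat f S w)
       & grad (Fhat f S) (w_ S) = 0]) ->
  (0 < size S0)%N -> 0 < lamR ->
  strongly_convex W (Fhat f S0) lamR ->
  RS w_ S0 <= L / ((size S0)%:R * lamR).
Proof.
move=> hdiff hgrad herm n0 lam0 hsc.
apply: ge_sup.
  case: S0 n0 {hsc herm} => // z0 S _.
  by exists (norm2 (w_ (z0 :: S) - w_ (z0 :: z0 :: S))); exists z0.
move=> _ [z _ <-].
exact: (@key_bound _ _ _ _ _ _ _ _ _ z hdiff hgrad herm n0 lam0 hsc).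
Qed.

Theorem mainTheorem11 (R : realType) (d : nat) (Z : Type)
  (W : set 'rV[R]_d) (f : 'rV[R]_d -> Z -> R) (L : R)
  (w_ : seq Z -> 'rV[R]_d) (n : nat) (S0 : seq Z) (lam lamR : R) :
  (forall z w, W w -> differentiable (fun w' => f w' z) w) ->
  (forall z w w', W w -> W w' -> `|f w z - f w' z| <= L * norm2 (w - w')) ->
  (forall z w, W w -> norm2 (grad (fun w' => f w' z) w) <= L) ->
  (forall S : seq Z, (0 < size S)%N ->
     [/\ W (w_ S), (forall w, W w -> Fhat f S (w_ S) <= Fhat f S w)
       & grad (Fhat f S) (w_ S) = 0]) ->
  (0 < n)%N ->
  size S0 = n ->
  0 < lam ->
  (forall S : seq Z, size S = n -> strongly_convex W (Fhat f S) lam) ->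
  strongly_convex W (Fhat f S0) lamR ->
  lam <= lamR ->
  [/\ RS w_ S0 <= L / (n%:R * lamR),
      GS w_ n <= L / (n%:R * lam)
    & RS w_ S0 / (L / (n%:R * lam)) <= lam / lamR].
Proof.
move=> hdiff _ hgrad herm n0 hS0 lam0 hscall hsc hle.
have lamR0 : 0 < lamR by apply: lt_le_trans hle.
have n0' : (0 < size S0)%N by rewrite hS0.
have b1 : RS w_ S0 <= L / (n%:R * lamR).
  by rewrite -hS0; exact: (@RS_bound _ _ _ _ _ _ _ _ _ hdiff hgrad herm n0' lamR0 hsc).
have [Ww _ _] := herm S0 n0'.
have L0 : 0 <= L.
  case: S0 n0' {hS0 hsc b1 Ww} => // z0 S _.
  have [W1 _ _] := herm (z0 :: S) isT.
  apply: le_trans (hgrad z0 _ W1); exact: norm2_ge0.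
split => //.
  apply: ge_sup; first by exists (RS w_ S0); exists S0.
  move=> _ [S hS <-].
  have nS : (0 < size S)%N by rewrite hS.
  by rewrite -hS; exact: (@RS_bound _ _ _ _ _ _ _ _ _ hdiff hgrad herm nS lam0 (hscall S hS)).
have npos : 0 < n%:R :> R by rewrite ltr0n.
have [Lz|Lp] := eqVneq L 0.
  by rewrite Lz mul0r invr0 mulr0; apply: divr_ge0; exact: ltW.
have Lpos : 0 < L by rewrite lt_def Lp L0.
rewrite ler_pdivrMr; last by apply: divr_gt0 => //; exact: mulr_gt0.
apply: (le_trans b1); rewrite le_eqVlt; apply/orP; left; apply/eqP.
field; rewrite ?lt0r_neq0 //; exact: mulr_gt0.
Qed.
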